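(* If $(\mathbf M,\tau)$ is a subdirectly irreducible state BL-algebra, then $\tau(M)$ and $\mathrm{Ker}(\tau)$ are linearly ordered.
   Context: A BL-algebra is an algebra $\mathbf M=(M;\wedge,\vee,\odot,\to,0,1)$ of type $\langle 2,2,2,2,0,0\rangle$ such that $(M;\wedge,\vee,0,1)$ is a bounded lattice, $(M;\odot,1)$ is a commutative monoid, and for all $a,b,c$: $c\le a\to b$ iff $a\odot c\le b$; $a\wedge b=a\odot(a\to b)$; $(a\to b)\vee(b\to a)=1$. A state-operator on $\mathbf M$ is a map $\tau:M\to M$ such that for all $x,y$: $\tau(0)=0$; $\tau(x\to y)=\tau(x)\to\tau(x\wedge y)$; $\tau(x\odot y)=\tau(x)\odot\tau(x\to(x\odot y))$; $\tau(\tau(x)\odot\tau(y))=\tau(x)\odot\tau(y)$; $\tau(\tau(x)\to\tau(y))=\tau(x)\to\tau(y)$; $(\mathbf M,\tau)$ is then a state BL-algebra, regarded as an algebra with the extra unary operation $\tau$, and subdirect irreducibility refers to this algebra. $\mathrm{Ker}(\tau)=\{a\in M:\tau(a)=1\}$. *)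

(* Defs.v *)
Set Implicit Arguments.

Record BLAlgebra := {
  bl_car :> Type;
  bl_meet : bl_car -> bl_car -> bl_car;
  bl_join : bl_car -> bl_car -> bl_car;
  bl_mul  : bl_car -> bl_car -> bl_car;
  bl_imp  : bl_car -> bl_car -> bl_car;
  bl_zero : bl_car;
  bl_one  : bl_car;
  bl_meetA : forall x y z, bl_meet x (bl_meet y z) = bl_meet (bl_meet x y) z;
  bl_joinA : forall x y z, bl_join x (bl_join y z) = bl_join (bl_join x y) z;
  bl_meetC : forall x y, bl_meet x y = bl_meet y x;
  bl_joinC : forall x y, bl_join x y = bl_join y x;
  bl_meetJ : forall x y, bl_meet x (bl_join x y) = x;
  bl_joinM : forall x y, bl_join x (bl_meet x y) = x;
  bl_meet0 : forall x, bl_meet bl_zero x = bl_zero;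
  bl_join1 : forall x, bl_join bl_one x = bl_one;
  bl_mulA : forall x y z, bl_mul x (bl_mul y z) = bl_mul (bl_mul x y) z;
  bl_mulC : forall x y, bl_mul x y = bl_mul y x;
  bl_mul1 : forall x, bl_mul bl_one x = x;
  (* residuation, divisibility, prelinearity (<= is the lattice order) *)
  bl_res : forall a b c,
      bl_meet c (bl_imp a b) = c <-> bl_meet (bl_mul a c) b = bl_mul a c;
  bl_div : forall a b, bl_meet a b = bl_mul a (bl_imp a b);
  bl_prel : forall a b, bl_join (bl_imp a b) (bl_imp b a) = bl_one
}.

Section Ops.
Variable M : BLAlgebra.

Definition bl_le (x y : M) : Prop := bl_meet M x y = x.

Definition state_operator (tau : M -> M) : Prop :=
  tau (bl_zero M) = bl_zero M /\
  (forall x y, tau (bl_imp M x y) = bl_imp M (tau x) (tau (bl_meet M x y))) /\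
  (forall x y, tau (bl_mul M x y) =
               bl_mul M (tau x) (tau (bl_imp M x (bl_mul M x y)))) /\
  (forall x y, tau (bl_mul M (tau x) (tau y)) = bl_mul M (tau x) (tau y)) /\
  (forall x y, tau (bl_imp M (tau x) (tau y)) = bl_imp M (tau x) (tau y)).

Definition state_congruence (tau : M -> M) (th : M -> M -> Prop) : Prop :=
  (forall x, th x x) /\
  (forall x y, th x y -> th y x) /\
  (forall x y z, th x y -> th y z -> th x z) /\
  (forall x x' y y', th x x' -> th y y' ->
      th (bl_meet M x y) (bl_meet M x' y') /\
      th (bl_join M x y) (bl_join M x' y') /\
      th (bl_mul M x y) (bl_mul M x' y') /\
      th (bl_imp M x y) (bl_imp M x' y')) /\
  (forall x y, th x y -> th (tau x) (tau y)).

(* subdirectly irreducible: nontrivial, and the intersection of all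
   non-identity congruences is not the identity congruence *)
Definition subdirectly_irreducible (tau : M -> M) : Prop :=
  (exists x y : M, x <> y) /\
  exists a b : M, a <> b /\
    forall th, state_congruence tau th ->
      (exists x y, th x y /\ x <> y) -> th a b.

Definition linearly_ordered (S : M -> Prop) : Prop :=
  forall x y, S x -> S y -> bl_le x y \/ bl_le y x.

Definition image_of (tau : M -> M) : M -> Prop := fun y => exists x, y = tau x.
Definition Ker (tau : M -> M) : M -> Prop := fun a => tau a = bl_one M.

End Ops.

Arguments state_operator {M} tau.
Arguments state_congruence {M} tau th.
Arguments subdirectly_irreducible {M} tau.
Arguments linearly_ordered {M} S.
Arguments image_of {M} tau _.
Arguments Ker {M} tau _.
Arguments bl_le {M} x y.

(* Main.v *)
Require Import Defs.
From Stdlib Require Import Classical Arith.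

Section BL.
Variable M : BLAlgebra.
Local Notation mt := (bl_meet M).
Local Notation jn := (bl_join M).
Local Notation ml := (bl_mul M).
Local Notation im := (bl_imp M).
Local Notation one := (bl_one M).
Local Notation le := (@bl_le M).

Lemma meet_id x : mt x x = x.
Proof. pose proof (bl_meetJ M x (mt x x)) as H. rewrite (bl_joinM M) in H. exact H. Qed.

Lemma le_refl x : le x x.
Proof. apply meet_id. Qed.

Lemma le_trans x y z : le x y -> le y z -> le x z.
Proof. unfold bl_le; intros H1 H2. rewrite <- H1, <- bl_meetA, H2. reflexivity. Qed.

Lemma le_antisym x y : le x y -> le y x -> x = y.
Proof. unfold bl_le; intros H1 H2. rewrite <- H1. rewrite bl_meetC. exact H2. Qed.

Lemma meet_glb x y z : le z x -> le z y -> le z (mt x y).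
Proof. unfold bl_le; intros H1 H2. rewrite bl_meetA, H1, H2. reflexivity. Qed.

Lemma meet_lb1 x y : le (mt x y) x.
Proof. unfold bl_le. rewrite (bl_meetC M _ x), bl_meetA, meet_id. reflexivity. Qed.

Lemma meet_lb2 x y : le (mt x y) y.
Proof. rewrite bl_meetC. apply meet_lb1. Qed.

Lemma le_join x y : le x y -> jn x y = y.
Proof. unfold bl_le; intros H. rewrite <- H. rewrite bl_joinC, bl_meetC, bl_joinM. reflexivity. Qed.

Lemma join_le x y : jn x y = y -> le x y.
Proof. unfold bl_le; intros H. rewrite <- H. apply bl_meetJ. Qed.

Lemma join_ub1 x y : le x (jn x y).
Proof. apply bl_meetJ. Qed.

Lemma join_ub2 x y : le y (jn x y).
Proof. rewrite bl_joinC. apply join_ub1. Qed.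

Lemma join_lub x y z : le x z -> le y z -> le (jn x y) z.
Proof. intros H1 H2. apply join_le. rewrite <- bl_joinA, (le_join _ _ H2), (le_join _ _ H1). reflexivity. Qed.

Lemma le_one x : le x one.
Proof. unfold bl_le. rewrite <- (bl_join1 M x), bl_joinC. apply bl_meetJ. Qed.

Lemma one_le x : le one x -> x = one.
Proof. intros H. apply le_antisym; [apply le_one | exact H]. Qed.

Lemma res c a b : le c (im a b) <-> le (ml a c) b.
Proof. apply bl_res. Qed.

Lemma mul_mono z x y : le x y -> le (ml z x) (ml z y).
Proof. intros H. apply res. eapply le_trans; [exact H|]. apply res, le_refl. Qed.

Lemma mul_mono2 x y x' y' : le x x' -> le y y' -> le (ml x y) (ml x' y').
Proof. intros H1 H2. eapply le_trans; [apply mul_mono; exact H2|].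
  rewrite (bl_mulC M x), (bl_mulC M x'). apply mul_mono; exact H1. Qed.

Lemma imp_self x : im x x = one.
Proof. apply one_le, res. rewrite bl_mulC, bl_mul1. apply le_refl. Qed.

Lemma mul_le x y : le (ml x y) x.
Proof. apply res. rewrite imp_self. apply le_one. Qed.

Lemma mul_le2 x y : le (ml x y) y.
Proof. rewrite bl_mulC. apply mul_le. Qed.

Lemma mp x y : le (ml x (im x y)) y.
Proof. apply res, le_refl. Qed.

Lemma mul_distr z x y : ml z (jn x y) = jn (ml z x) (ml z y).
Proof. apply le_antisym.
  - apply res. apply join_lub; apply res; [apply join_ub1 | apply join_ub2].
  - apply join_lub; apply mul_mono; [apply join_ub1 | apply join_ub2]. Qed.

Lemma le_imp_one a b : le a b <-> im a b = one.
Proof. split.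
  - intros H. apply one_le, res. rewrite bl_mulC, bl_mul1. exact H.
  - intros H. pose proof (proj1 (res one a b)) as H'. rewrite H in H'.
    specialize (H' (le_refl _)). rewrite bl_mulC, bl_mul1 in H'. exact H'. Qed.

Lemma join_mul x y z : jn x y = one -> jn x z = one -> jn x (ml y z) = one.
Proof. intros H1 H2. apply one_le.
  assert (E : ml (jn x y) (jn x z) = one) by (rewrite H1, H2, bl_mul1; reflexivity).
  rewrite <- E. rewrite mul_distr, (bl_mulC M (jn x y) x), (bl_mulC M (jn x y) z), !mul_distr.
  apply join_lub; apply join_lub.
  - eapply le_trans; [apply mul_le|apply join_ub1].
  - eapply le_trans; [apply mul_le|apply join_ub1].
  - eapply le_trans; [apply mul_le2|apply join_ub1].
  - rewrite bl_mulC. apply join_ub2. Qed.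

Fixpoint pw (u : M) (n : nat) : M :=
  match n with 0 => one | S k => ml u (pw u k) end.

Lemma pw_add u n m : pw u (n + m) = ml (pw u n) (pw u m).
Proof. induction n; simpl. - rewrite bl_mul1; reflexivity.
  - rewrite IHn, bl_mulA. reflexivity. Qed.

Lemma pw_dec u n m : le (pw u (n + m)) (pw u n).
Proof. rewrite pw_add. apply mul_le. Qed.

Lemma join_pw1 u v m : jn u v = one -> jn u (pw v m) = one.
Proof. intros H. induction m; simpl.
  - rewrite bl_joinC. apply bl_join1.
  - apply join_mul; assumption. Qed.

Lemma join_pw u v n m : jn u v = one -> jn (pw u n) (pw v m) = one.
Proof. intros H. apply join_pw1. rewrite bl_joinC. apply join_pw1. rewrite bl_joinC. exact H. Qed.

Definition R u x y := exists n, le (ml (pw u n) x) y.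
Definition th u x y := R u x y /\ R u y x.

Lemma R_refl u x : R u x x.
Proof. exists 0. simpl. rewrite bl_mul1. apply le_refl. Qed.

Lemma R_trans u x y z : R u x y -> R u y z -> R u x z.
Proof. intros [n Hn] [m Hm]. exists (m + n). rewrite pw_add, <- bl_mulA.
  eapply le_trans; [apply mul_mono; exact Hn| exact Hm]. Qed.

Lemma R_mul u x x' y y' : R u x x' -> R u y y' -> R u (ml x y) (ml x' y').
Proof. intros [n Hn] [m Hm]. exists (n + m). rewrite pw_add.
  replace (ml (ml (pw u n) (pw u m)) (ml x y)) with (ml (ml (pw u n) x) (ml (pw u m) y)).
  - apply mul_mono2; assumption.
  - rewrite !bl_mulA. f_equal. rewrite <- !bl_mulA. f_equal. apply bl_mulC. Qed.

Lemma R_meet u x x' y y' : R u x x' -> R u y y' -> R u (mt x y) (mt x' y').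
Proof. intros [n Hn] [m Hm]. exists (n + m). apply meet_glb.
  - eapply le_trans; [|exact Hn]. apply mul_mono2; [apply pw_dec|apply meet_lb1].
  - eapply le_trans; [|exact Hm]. apply mul_mono2; [rewrite Nat.add_comm; apply pw_dec|apply meet_lb2]. Qed.

Lemma R_join u x x' y y' : R u x x' -> R u y y' -> R u (jn x y) (jn x' y').
Proof. intros [n Hn] [m Hm]. exists (n + m). rewrite mul_distr. apply join_lub.
  - eapply le_trans; [|apply join_ub1]. eapply le_trans; [|exact Hn].
    apply mul_mono2; [apply pw_dec|apply le_refl].
  - eapply le_trans; [|apply join_ub2]. eapply le_trans; [|exact Hm].
    apply mul_mono2; [rewrite Nat.add_comm; apply pw_dec|apply le_refl]. Qed.

Lemma R_imp u x x' y y' : R u x' x -> R u y y' -> R u (im x y) (im x' y').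
Proof. intros [n Hn] [m Hm]. exists (n + m). apply res.
  rewrite pw_add.
  replace (ml x' (ml (ml (pw u n) (pw u m)) (im x y))) with
     (ml (pw u m) (ml (ml (pw u n) x') (im x y))).
  - eapply le_trans; [|exact Hm]. apply mul_mono.
    eapply le_trans; [|apply mp]. apply mul_mono2; [exact Hn|apply le_refl].
  - rewrite !bl_mulA. f_equal. rewrite (bl_mulC M (ml x' (pw u n)) (pw u m)), (bl_mulC M x' (pw u n)).
    rewrite bl_mulA. reflexivity. Qed.

Section Tau.
Variable tau : M -> M.
Hypothesis Hs : state_operator tau.

Lemma tau_one : tau one = one.
Proof. destruct Hs as [H0 [H1 _]]. pose proof (H1 (bl_zero M) (bl_zero M)) as E.
  rewrite meet_id, H0, imp_self in E. exact E. Qed.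

Lemma meet_div x y : le x y -> ml y (im y x) = x.
Proof. intros H. rewrite <- bl_div, bl_meetC. exact H. Qed.

Lemma tau_mono x y : le x y -> le (tau x) (tau y).
Proof. intros H. destruct Hs as [_ [_ [H2 _]]].
  rewrite <- (meet_div _ _ H), H2. apply mul_le. Qed.

Lemma tau_super w x : le (ml (tau w) (tau x)) (tau (ml w x)).
Proof. destruct Hs as [_ [_ [H2 _]]]. rewrite H2. apply mul_mono.
  apply tau_mono. apply res, le_refl. Qed.

Lemma tau_idem x : tau (tau x) = tau x.
Proof. destruct Hs as [_ [_ [_ [H3 _]]]].
  pose proof (H3 x one) as E. rewrite tau_one, (bl_mulC M (tau x)), bl_mul1 in E. exact E. Qed.

Lemma R_tau u x y : (forall n, le (pw u n) (tau (pw u n))) -> R u x y -> R u (tau x) (tau y).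
Proof. intros Hu [n Hn]. exists n.
  eapply le_trans; [apply mul_mono2; [apply Hu|apply le_refl]|].
  eapply le_trans; [apply tau_super|]. apply tau_mono; exact Hn. Qed.

Lemma th_cong u : (forall n, le (pw u n) (tau (pw u n))) -> state_congruence tau (th u).
Proof. intros Hu. unfold state_congruence, th. split; [|split; [|split; [|split]]].
  - intros x; split; apply R_refl.
  - intros x y [H1 H2]; split; assumption.
  - intros x y z [H1 H2] [H3 H4]; split; eapply R_trans; eauto.
  - intros x x' y y' [H1 H2] [H3 H4].
    split; [|split; [|split]]; split;
      first [apply R_meet | apply R_join | apply R_mul | apply R_imp]; assumption.
  - intros x y [H1 H2]; split; apply R_tau; assumption. Qed.

Lemma key (P : M -> Prop) :
  subdirectly_irreducible tau ->
  (forall a b, P a -> P b -> forall n, le (pw (im a b) n) (tau (pw (im a b) n))) ->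
  linearly_ordered P.
Proof. intros [_ [a0 [b0 [Hne Hsi]]]] HP a b Pa Pb.
  destruct (classic (le a b)) as [H|H]; [left; exact H|].
  destruct (classic (le b a)) as [H'|H']; [right; exact H'|].
  exfalso. apply Hne.
  set (u := im a b). set (v := im b a).
  assert (Hnu : u <> one) by (intro E; apply H, le_imp_one, E).
  assert (Hnv : v <> one) by (intro E; apply H', le_imp_one, E).
  assert (Tu : th u a0 b0).
  { apply Hsi. apply th_cong, HP; assumption. exists u, one. split; [|exact Hnu].
    split; [exists 0; apply le_one| exists 1; simpl; eapply le_trans; apply mul_le]. }
  assert (Tv : th v a0 b0).
  { apply Hsi. apply th_cong, HP; assumption. exists v, one. split; [|exact Hnv].
    split; [exists 0; apply le_one| exists 1; simpl; eapply le_trans; apply mul_le]. }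
  assert (J : forall n m, jn (pw u n) (pw v m) = one) by (intros; apply join_pw, bl_prel).
  assert (G : forall x y, R u x y -> R v x y -> le x y).
  { intros x y [n Hn] [m Hm]. rewrite <- (bl_mul1 M x), <- (J n m), bl_mulC, mul_distr.
    apply join_lub; rewrite bl_mulC; assumption. }
  destruct Tu as [U1 U2], Tv as [V1 V2].
  apply le_antisym; apply G; assumption. Qed.

End Tau.
End BL.

Theorem lemma2p2 (M : BLAlgebra) (tau : M -> M) :
  state_operator tau ->
  subdirectly_irreducible tau ->
  linearly_ordered (image_of tau) /\ linearly_ordered (Ker tau).
Proof.
  intros Hs Hsi. split; apply (@key _ _ Hs); auto.
  - intros a b [x Ha] [y Hb] n. subst a b.
    assert (Hu : tau (bl_imp M (tau x) (tau y)) = bl_imp M (tau x) (tau y))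
      by (destruct Hs as [_ [_ [_ [_ H4]]]]; apply H4).
    set (w := bl_imp M (tau x) (tau y)) in *.
    assert (E : tau (pw M w n) = pw M w n).
    { induction n; simpl. - apply (@tau_one _ _ Hs).
      - destruct Hs as [_ [_ [_ [H3 _]]]].
        transitivity (tau (bl_mul M (tau w) (tau (pw M w n)))); [rewrite Hu, IHn; reflexivity|].
        rewrite H3, Hu, IHn. reflexivity. }
    rewrite E. apply le_refl.
  - intros a b Ha Hb n. unfold Ker in *.
    assert (Hu : tau (bl_imp M a b) = bl_one M).
    { apply one_le. rewrite <- Hb. apply (@tau_mono _ _ Hs). apply res. apply mul_le2. }
    assert (E : tau (pw M (bl_imp M a b) n) = bl_one M).
    { induction n; simpl. - apply (@tau_one _ _ Hs).
      - apply one_le. rewrite <- (bl_mul1 M (bl_one M)) at 1. rewrite <- Hu at 1. rewrite <- IHn at 1.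
        apply (@tau_super _ _ Hs). }
    rewrite E. apply le_one.
Qed.
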